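(* Let $G=(V,E)$ be a finite simple graph and let $F$ be any finite field. Let $L$ be its connection matrix and $|H|$ its sign-less Hodge Laplacian, both regarded as matrices over $F$ via the canonical ring homomorphism $\mathbb{Z}\to F$. Then $L$ is invertible over $F$ and $|H|=L-L^{-1}$ holds over $F$. In particular, the map $\psi\mapsto L\psi$ is a bijection of the finite set $F^X$ of $F$-valued functions on the simplices, and the two-sided orbit $n\mapsto L^n\psi$, $n\in\mathbb{Z}$, is well defined.
   Context: Let $G=(V,E)$ be a finite simple graph. Its associated $1$-dimensional simplicial complex is the set of simplices $X=\{\{v\}: v\in V\}\cup E$, where each edge is regarded as a $2$-element subset of $V$; matrices are indexed by $X$. The connection matrix $L$ has $L(x,y)=1$ if $x\cap y\neq\emptyset$ and $L(x,y)=0$ otherwise. The sign-less exterior derivative $|d|$ has $|d|(x,y)=1$ if $y\subset x$ and $|x|=|y|+1$, and $0$ otherwise; the sign-less Hodge Laplacian is $|H|=(|d|+|d|^T)^2$. *)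

(* Defs.v *)
From HB Require Import structures.
From mathcomp Require Import all_boot all_order all_algebra.
Set Implicit Arguments. Unset Strict Implicit. Unset Printing Implicit Defensive.
Import GRing.Theory.
Local Open Scope ring_scope.

(* A finite simple graph: vertex type V : finType, adjacency e : rel V,
   assumed symmetric and irreflexive in the theorem. *)

(* Simplices of the 1-dimensional complex: singletons {v} and edges {u,v}. *)
Definition is_simplex (V : finType) (e : rel V) (x : {set V}) : bool :=
  (#|x| == 1)%N || [exists u : V, exists v : V, e u v && (x == [set u; v])].

Definition simplex (V : finType) (e : rel V) := {x : {set V} | is_simplex e x}.

(* number of simplices; matrices are indexed by 'I_(nsimp e) via enum_val *)
Definition nsimp (V : finType) (e : rel V) : nat := #|{: simplex e}|.

Definition sx (V : finType) (e : rel V) (i : 'I_(nsimp e)) : {set V} :=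
  val (@enum_val (simplex e) predT i).

Definition conn_mx (F : nzRingType) (V : finType) (e : rel V) : 'M[F]_(nsimp e) :=
  \matrix_(i, j) ((sx i :&: sx j) != set0)%:R.

Definition absd_mx (F : nzRingType) (V : finType) (e : rel V) : 'M[F]_(nsimp e) :=
  \matrix_(i, j) ((sx j \subset sx i) && (#|sx i| == #|sx j| + 1)%N)%:R.

Definition abshodge_mx (F : nzRingType) (V : finType) (e : rel V) : 'M[F]_(nsimp e) :=
  let D := absd_mx F e + (absd_mx F e)^T in D *m D.

(* Main.v *)
Require Import Defs.
From HB Require Import structures.
From mathcomp Require Import all_boot all_order all_algebra.
Import GRing.Theory.
Local Open Scope ring_scope.

Lemma alg_id (R : pzRingType) (P Q d T : R) :
  P + Q = 1 -> P * P = P -> Q * Q = Q -> P * Q = 0 -> Q * P = 0 ->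
  P * d = 0 -> d * P = d -> Q * d = d -> d * Q = 0 ->
  P * T = T -> T * P = 0 -> Q * T = 0 -> T * Q = T ->
  (P - Q + d + T + d * T) * (P - Q + d + T - T * d) = 1.
Proof.
move=> PQ1 PP QQ PQ QP Pd dP Qd dQ PT TP QT TQ.
have dd : d * d = 0.
  have -> : d * d = (d * P) * (Q * d) by rewrite dP Qd.
  by rewrite -mulrA (mulrA P) PQ mul0r mulr0.
have TT : T * T = 0.
  have -> : T * T = (T * Q) * (P * T) by rewrite TQ PT.
  by rewrite -mulrA (mulrA Q) QP mul0r mulr0.
have r (a b c x : R) : a * b = c -> a * (b * x) = c * x by move=> <-; rewrite mulrA.
rewrite !(mulrDl, mulrDr, mulrN, mulNr, opprK) -!mulrA.
rewrite ?(r _ _ _ _ PP, r _ _ _ _ QQ, r _ _ _ _ PQ, r _ _ _ _ QP, r _ _ _ _ Pd, r _ _ _ _ dP,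
  r _ _ _ _ Qd, r _ _ _ _ dQ, r _ _ _ _ PT, r _ _ _ _ TP, r _ _ _ _ QT, r _ _ _ _ TQ,
  r _ _ _ _ dd, r _ _ _ _ TT).
rewrite PP QQ PQ QP Pd dP Qd dQ PT TP QT TQ dd TT ?(mul0r, mulr0, oppr0, add0r, addr0).
rewrite -PQ1.
move: (T * d) (d * T) (d * (T * d)) => a b c.
rewrite -!addrA; congr (P + _).
rewrite addrCA addKr.
rewrite (addrCA T) (addrCA (-a)) -[RHS]addr0; congr (Q + _).
rewrite [-c + _]addrCA [b + _]addrCA addNKr.
rewrite [-c + _]addrCA [b + _]addrCA addKr.
rewrite [-c + _]addrCA addNKr.
by rewrite addNr.
Qed.

Section S.
Variables (V : finType) (e : rel V) (e_irr : irreflexive e).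

Lemma sx_size1 (i : 'I_(nsimp e)) : (#|sx i| == 2)%N = ~~ (#|sx i| == 1)%N.
Proof.
rewrite /sx; case: (enum_val i) => x /= /orP[/eqP->//|/existsP[u /existsP[v /andP[euv /eqP->]]]].
rewrite cards2; have uv : u != v by apply/eqP => uv; rewrite uv e_irr in euv.
by rewrite uv.
Qed.

Lemma sx_pos (i : 'I_(nsimp e)) : (0 < #|sx i|)%N.
Proof. by case: (boolP (#|sx i| == 1)%N) => [/eqP->//|]; rewrite -sx_size1 => /eqP->. Qed.

Lemma sx_inj : injective (@sx V e).
Proof. by move=> i j /val_inj /enum_val_inj. Qed.

Lemma simp1 (v : V) : is_simplex e [set v].
Proof. by rewrite /is_simplex cards1. Qed.

Lemma sx_rank (s : simplex e) : sx (enum_rank s) = val s.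
Proof. by rewrite /sx enum_rankK. Qed.

Lemma count1 (S : {set V}) :
  #|[pred k : 'I_(nsimp e) | (sx k \subset S) && (#|sx k| == 1)%N]| = #|S|.
Proof.
rewrite -(card_imset _ sx_inj) -[RHS](card_imset _ set1_inj).
apply: eq_card => x; apply/imsetP/imsetP.
  move=> [k /andP[kS /cards1P[v xv]] ->]; exists v => //.
  by rewrite -sub1set -xv.
move=> [v vS ->]; exists (enum_rank (Sub [set v] (simp1 v) : simplex e)).
  by rewrite inE sx_rank /= sub1set vS cards1.
by rewrite sx_rank.
Qed.
End S.

Section M.
Variables (F : finFieldType) (V : finType) (e : rel V) (e_irr : irreflexive e).
Local Notation n := (nsimp e).
Local Notation b1 i := (#|@sx V e i| == 1)%N.

Lemma sz12 (i : 'I_n) : #|sx i| = 1%N \/ #|sx i| = 2.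
Proof.
case: (boolP (#|sx i| == 1)%N) => [/eqP->|]; first by left.
by rewrite -sx_size1 // => /eqP->; right.
Qed.

Definition Pm : 'M[F]_n := diag_mx (\row_i (b1 i)%:R).
Definition Qm : 'M[F]_n := diag_mx (\row_i (~~ b1 i)%:R).
Local Notation dm := (absd_mx F e).

Lemma d_entry i j : dm i j = ((sx j \subset sx i) && ~~ b1 i && b1 j)%:R.
Proof.
rewrite mxE; congr (_%:R).
by case: (sz12 i) => ->; case: (sz12 j) => ->; rewrite ?andbF ?andbT.
Qed.

Lemma PQ1 : Pm + Qm = 1%:M.
Proof.
apply/matrixP => i j; rewrite !mxE.
by case: (i == j); case: (b1 i); rewrite ?addr0 ?add0r.
Qed.

Lemma d_eq : dm = \matrix_(i, j) ((sx j \subset sx i) && ~~ b1 i && b1 j)%:R.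
Proof. by apply/matrixP => i j; rewrite d_entry mxE. Qed.

Ltac fin i j := rewrite ?d_entry; case: (b1 i); case: (b1 j); case: (i == j);
  rewrite ?(mul0r, mul1r, mulr0, mulr1, andbF, andbT, mulr0n, mulr1n) //.

Lemma PP : Pm *m Pm = Pm.
Proof. rewrite ?d_eq; apply/matrixP => i j; rewrite mul_diag_mx !mxE; fin i j. Qed.
Lemma QQ : Qm *m Qm = Qm.
Proof. rewrite ?d_eq; apply/matrixP => i j; rewrite mul_diag_mx !mxE; fin i j. Qed.
Lemma PQ : Pm *m Qm = 0.
Proof. rewrite ?d_eq; apply/matrixP => i j; rewrite mul_diag_mx !mxE; fin i j. Qed.
Lemma QP : Qm *m Pm = 0.
Proof. rewrite ?d_eq; apply/matrixP => i j; rewrite mul_diag_mx !mxE; fin i j. Qed.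
Lemma Pd : Pm *m dm = 0.
Proof. rewrite ?d_eq; apply/matrixP => i j; rewrite mul_diag_mx !mxE; fin i j. Qed.
Lemma Qd : Qm *m dm = dm.
Proof. rewrite ?d_eq; apply/matrixP => i j; rewrite mul_diag_mx !mxE; fin i j. Qed.
Lemma dP : dm *m Pm = dm.
Proof. rewrite ?d_eq; apply/matrixP => i j; rewrite mul_mx_diag !mxE; fin i j. Qed.
Lemma dQ : dm *m Qm = 0.
Proof. rewrite ?d_eq; apply/matrixP => i j; rewrite mul_mx_diag !mxE; fin i j. Qed.
Lemma PT : Pm *m dm^T = dm^T.
Proof. rewrite ?d_eq; apply/matrixP => i j; rewrite mul_diag_mx !mxE; fin i j. Qed.
Lemma QT : Qm *m dm^T = 0.
Proof. rewrite ?d_eq; apply/matrixP => i j; rewrite mul_diag_mx !mxE; fin i j. Qed.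
Lemma TP : dm^T *m Pm = 0.
Proof. rewrite ?d_eq; apply/matrixP => i j; rewrite mul_mx_diag !mxE; fin i j. Qed.
Lemma TQ : dm^T *m Qm = dm^T.
Proof. rewrite ?d_eq; apply/matrixP => i j; rewrite mul_mx_diag !mxE; fin i j. Qed.

Lemma dT_entry i j : (dm *m dm^T) i j =
  if ~~ b1 i && ~~ b1 j then (#|sx i :&: sx j|)%:R else 0.
Proof.
rewrite d_eq mxE.
case: (boolP (b1 i)) => bi /=.
  by apply: big1 => k _; rewrite !mxE bi andbF mul0r.
case: (boolP (b1 j)) => bj /=.
  by apply: big1 => k _; rewrite !mxE bj andbF mulr0.
rewrite (eq_bigr (fun k => ((sx k \subset sx i :&: sx j) && b1 k)%:R)); last first.
  move=> k _; rewrite !mxE subsetI -natrM mulnb bi bj /=.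
  by case: (sx k \subset sx i); case: (sx k \subset sx j); case: (b1 k).
rewrite -natr_sum -(@count1 V e (sx i :&: sx j)); congr (_%:R).
rewrite -sum1_card [RHS]big_mkcond; apply: eq_bigr => k _ /=.
by rewrite inE; case: (_ && _).
Qed.

Lemma L_eq : conn_mx F e = Pm - Qm + dm + dm^T + dm *m dm^T.
Proof.
apply/matrixP => i j.
have dT_eq : dm *m dm^T = \matrix_(i, j)
  (if ~~ b1 i && ~~ b1 j then (#|sx i :&: sx j|)%:R else 0 : F).
  by apply/matrixP => a b; rewrite dT_entry mxE.
rewrite dT_eq d_eq !mxE.
case: (boolP (b1 i)) => bi; case: (boolP (b1 j)) => bj /=.
- have /cards1P [u su] := bi; have /cards1P [v sv] := bj.
  rewrite -[i == j](inj_eq (@sx_inj V e)) su sv (inj_eq set1_inj) setI_eq0 disjoints1 in_set1.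
  rewrite negbK !andbF mul0rn subr0 !addr0; by case: (u == v).
- have ij : (i == j) = false.
    by apply/negbTE; apply/eqP => ij; move: bj; rewrite -ij bi.
  have /cards1P [u su] := bi.
  rewrite ij su setI_eq0 disjoints1 negbK sub1set.
  by rewrite !andbT !andbF /= mulr0n mul0rn subr0 !add0r addr0.
- have ij : (i == j) = false.
    by apply/negbTE; apply/eqP => ij; move: bi; rewrite ij bj.
  have /cards1P [v sv] := bj.
  rewrite ij sv setIC setI_eq0 disjoints1 negbK sub1set.
  by rewrite !andbT !andbF /= ?mulr0n ?mul0rn subr0 !add0r !addr0.
- case: (eqVneq i j) => [<-|ij].
    have s2 : #|sx i| = 2 by apply/eqP; rewrite sx_size1.
    rewrite setIid -cards_eq0 s2 /= !andbF /= mul0rn mulr1n sub0r !addr0.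
    by rewrite mulr2n addKr.
  rewrite !andbF /= mul0rn sub0r oppr0 !add0r.
  have s2i : #|sx i| = 2 by apply/eqP; rewrite sx_size1.
  have s2j : #|sx j| = 2 by apply/eqP; rewrite sx_size1.
  have le1 : (#|sx i :&: sx j| <= 1)%N.
    rewrite leqNgt; apply/negP => lt1.
    have Ei : sx i :&: sx j = sx i.
      apply/eqP; rewrite eqEcard subsetIl s2i; exact: lt1.
    have Ej : sx i :&: sx j = sx j.
      apply/eqP; rewrite eqEcard subsetIr s2j; exact: lt1.
    by move: ij; rewrite (@sx_inj V e _ _ (etrans (esym Ei) Ej)) eqxx.
  rewrite -cards_eq0; move: le1; case: #|_| => [|[|]] //.
Qed.

Lemma dd : dm *m dm = 0.
Proof.
have -> : dm *m dm = (dm *m Pm) *m (Qm *m dm) by rewrite dP Qd.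
by rewrite -mulmxA (mulmxA Pm) PQ mul0mx mulmx0.
Qed.
Lemma TT : dm^T *m dm^T = 0.
Proof.
have -> : dm^T *m dm^T = (dm^T *m Qm) *m (Pm *m dm^T) by rewrite TQ PT.
by rewrite -mulmxA (mulmxA Qm) QP mul0mx mulmx0.
Qed.
Lemma H_eq : abshodge_mx F e = dm *m dm^T + dm^T *m dm.
Proof. by rewrite /abshodge_mx mulmxDl !mulmxDr dd TT add0r addr0. Qed.
End M.

Theorem mainTheorem7 (F : finFieldType) (V : finType) (e : rel V)
    (e_sym : symmetric e) (e_irr : irreflexive e) :
  conn_mx F e \in unitmx /\
  abshodge_mx F e = conn_mx F e - invmx (conn_mx F e) /\
  bijective (fun psi : 'cV[F]_(nsimp e) => conn_mx F e *m psi).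
Proof.
set L := conn_mx F e; set M := L - abshodge_mx F e.
have key : L *m M = 1%:M.
  have -> : M = @Pm F V e - @Qm F V e + absd_mx F e + (absd_mx F e)^T
      - (absd_mx F e)^T *m absd_mx F e.
    by rewrite /M /L (@L_eq F V e e_irr) (@H_eq F V e e_irr) opprD addrA addrK.
  rewrite /L (@L_eq F V e e_irr) mulmxE; apply: alg_id; rewrite -?mulmxE.
  all: try first [exact: PQ1 | exact: PP | exact: QQ | exact: PQ | exact: QP | exact: Pd
    | exact: dP | exact: Qd | exact: dQ | exact: PT | exact: TP | exact: QT | exact: TQ].
have [Lu _] := mulmx1_unit key.
have Minv : invmx L = M.
  by rewrite -[invmx L]mulmx1 -key mulmxA mulVmx // mul1mx.
split; first exact: Lu.
split; first by rewrite Minv /M opprB addrCA subrr addr0.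
exists (fun psi => invmx L *m psi) => psi; first exact: mulKmx.
exact: mulKVmx.
Qed.
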